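(* Let $\phi_i:\mathbb{R}\to\mathbb{R}$ be twice differentiable, let $x_i\in\mathbb{R}^d\setminus\{0\}$, $y_i\in\mathbb{R}$, and let $f_i(w)=\phi_i(x_i^\top w-y_i)$, assumed non-negative for all $w\in\mathbb{R}^d$. Fix $w^t\in\mathbb{R}^d$ and write $f_i:=f_i(w^t)$, $a_i:=\phi_i'(x_i^\top w^t-y_i)$, $h_i:=\phi_i''(x_i^\top w^t-y_i)$, so that $\nabla f_i(w^t)=a_ix_i$ and $\nabla^2 f_i(w^t)=h_ix_ix_i^\top$. Consider the projection problem $$\min_{w\in\mathbb{R}^d}\ \tfrac12\|w-w^t\|^2\quad\text{s.t.}\quad f_i(w^t)+\langle \nabla f_i(w^t),w-w^t\rangle+\tfrac12\langle \nabla^2 f_i(w^t)(w-w^t),w-w^t\rangle=0 .$$ (i) If $a_i^2-2h_if_i\ge 0$ (and $h_i\neq 0$, $a_i\neq 0$, so that the following expression is defined), then an optimal solution of this problem is $$w^{t+1}=w^t-\frac{a_i}{h_i}\left(1-\frac{\sqrt{a_i^2-2h_if_i}}{|a_i|}\right)\frac{x_i}{\|x_i\|^2}.$$ (ii) If $a_i^2-2h_if_i<0$, then necessarily $h_i>0$, and the point $$w^{t+1}=w^t-\frac{a_i}{h_i}\frac{x_i}{\|x_i\|^2}$$ is a minimizer over $w\in\mathbb{R}^d$ of the local quadratic $f_i(w^t)+\langle \nabla f_i(w^t),w-w^t\rangle+\tfrac12\langle \nabla^2 f_i(w^t)(w-w^t),w-w^t\rangle$.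
   Context: This is the ''SP2'' step for generalized linear models: projecting $w^t$ onto the zero set of the second-order Taylor expansion of $f_i$ at $w^t$. *)

(* Defs.v *)
From HB Require Import structures.
From mathcomp Require Import all_boot all_order all_algebra.
From mathcomp Require Import all_classical all_reals all_analysis.
Set Implicit Arguments. Unset Strict Implicit. Unset Printing Implicit Defensive.
Import Order.TTheory GRing.Theory Num.Theory.
Local Open Scope ring_scope.

Definition dotp (R : realType) (d : nat) (u v : 'rV[R]_d) : R :=
  \sum_(k < d) u 0 k * v 0 k.

Definition sqnorm (R : realType) (d : nat) (u : 'rV[R]_d) : R := dotp u u.

Definition glm (R : realType) (d : nat) (phi : R -> R) (x : 'rV[R]_d) (y : R)
  (w : 'rV[R]_d) : R := phi (dotp x w - y).

Definition glm_a (R : realType) (d : nat) (phi : R -> R) (x : 'rV[R]_d) (y : R)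
  (wt : 'rV[R]_d) : R := derive1 phi (dotp x wt - y).
Definition glm_h (R : realType) (d : nat) (phi : R -> R) (x : 'rV[R]_d) (y : R)
  (wt : 'rV[R]_d) : R := derive1n 2 phi (dotp x wt - y).

Definition glm_grad (R : realType) (d : nat) (phi : R -> R) (x : 'rV[R]_d) (y : R)
  (wt : 'rV[R]_d) : 'rV[R]_d := glm_a phi x y wt *: x.
Definition glm_hess (R : realType) (d : nat) (phi : R -> R) (x : 'rV[R]_d) (y : R)
  (wt : 'rV[R]_d) : 'M[R]_d := glm_h phi x y wt *: (x^T *m x).

Definition taylor2 (R : realType) (d : nat) (phi : R -> R) (x : 'rV[R]_d) (y : R)
  (wt w : 'rV[R]_d) : R :=
  glm phi x y wt + dotp (glm_grad phi x y wt) (w - wt)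
  + 2^-1 * dotp ((w - wt) *m glm_hess phi x y wt) (w - wt).

(* Main.v *)
Require Import Defs.
From HB Require Import structures.
From mathcomp Require Import all_boot all_order all_algebra.
From mathcomp Require Import all_classical all_reals all_analysis.
From mathcomp Require Import ring lra.
Set Implicit Arguments. Unset Strict Implicit.
Import Order.TTheory GRing.Theory Num.Theory.
Local Open Scope ring_scope.

Lemma dotpDl (R : realType) (d : nat) (u v w : 'rV[R]_d) :
  dotp (u + v) w = dotp u w + dotp v w.
Proof. rewrite /dotp -big_split; apply: eq_bigr => k _; by rewrite mxE mulrDl. Qed.
Lemma dotpZl (R : realType) (d : nat) (c : R) (u w : 'rV[R]_d) :
  dotp (c *: u) w = c * dotp u w.
Proof. rewrite /dotp mulr_sumr; apply: eq_bigr => k _; by rewrite mxE mulrA. Qed.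
Lemma dotpC (R : realType) (d : nat) (u w : 'rV[R]_d) : dotp u w = dotp w u.
Proof. rewrite /dotp; apply: eq_bigr => k _; by rewrite mulrC. Qed.
Lemma dotpNl (R : realType) (d : nat) (u w : 'rV[R]_d) : dotp (- u) w = - dotp u w.
Proof. by rewrite -scaleN1r dotpZl mulN1r. Qed.
Lemma dotpDr (R : realType) (d : nat) (u v w : 'rV[R]_d) :
  dotp w (u + v) = dotp w u + dotp w v.
Proof. by rewrite dotpC dotpDl !(dotpC w). Qed.
Lemma dotpZr (R : realType) (d : nat) (c : R) (u w : 'rV[R]_d) :
  dotp w (c *: u) = c * dotp w u.
Proof. by rewrite dotpC dotpZl dotpC. Qed.
Lemma dotpNr (R : realType) (d : nat) (u w : 'rV[R]_d) : dotp w (- u) = - dotp w u.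
Proof. by rewrite dotpC dotpNl dotpC. Qed.

Lemma sqnorm_ge0 (R : realType) (d : nat) (u : 'rV[R]_d) : 0 <= sqnorm u.
Proof. by apply: sumr_ge0 => k _; rewrite -expr2 sqr_ge0. Qed.

Lemma sqnorm_gt0 (R : realType) (d : nat) (u : 'rV[R]_d) : u != 0 -> 0 < sqnorm u.
Proof.
move=> nz; rewrite lt_neqAle sqnorm_ge0 andbT eq_sym; apply: contra nz => /eqP H.
have H' : \sum_(k < d) u 0 k ^+ 2 = 0.
  by rewrite -[RHS]H /sqnorm /dotp; apply: eq_bigr => k _; rewrite expr2.
have H2 := psumr_eq0P (fun k _ => sqr_ge0 (u 0 k)) H'.
apply/eqP/matrixP => i j; rewrite !ord1 mxE.
by have /eqP := H2 j isT; rewrite sqrf_eq0 => /eqP.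
Qed.

Lemma mul_rowcol (R : realType) (d : nat) (s x : 'rV[R]_d) :
  s *m x^T = (dotp s x)%:M.
Proof.
apply/matrixP => i j; rewrite !ord1 !mxE /dotp /=; apply: eq_bigr => k _.
by rewrite mxE.
Qed.

Lemma taylor2E (R : realType) (d : nat) (phi : R -> R) (x : 'rV[R]_d) (y : R)
  (wt w : 'rV[R]_d) :
  taylor2 phi x y wt w = glm phi x y wt + glm_a phi x y wt * dotp x (w - wt)
   + 2^-1 * (glm_h phi x y wt * (dotp x (w - wt))^+2).
Proof.
rewrite /taylor2 /glm_grad /glm_hess dotpZl -scalemxAr mulmxA mul_rowcol.
rewrite mul_scalar_mx dotpZl dotpZl (dotpC (w - wt) x); congr (_ + _ * _); ring.
Qed.

Lemma cs (R : realType) (d : nat) (x s : 'rV[R]_d) : 0 < sqnorm x ->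
  (dotp x s)^+2 / sqnorm x <= sqnorm s.
Proof.
move=> Np; set N := sqnorm x; set u := dotp x s.
have := sqnorm_ge0 (s - (u / N) *: x).
rewrite /sqnorm dotpDl dotpDr dotpDr dotpNl dotpNr !dotpNl !dotpZl !dotpZr.
rewrite -/(sqnorm x) -/N (dotpC s x) -/u -/(sqnorm s).
rewrite dotpNr dotpZr -/N.
have -> : sqnorm s - u / N * u + (- (u / N * u) - u / N * - (u / N * N)) = sqnorm s - u^+2 / N.
  by field; rewrite gt_eqF.
by rewrite subr_ge0.
Qed.
Theorem lemma1 (R : realType) (d : nat) (phi : R -> R) (x : 'rV[R]_d) (y : R)
    (wt : 'rV[R]_d) :
  (forall z : R, derivable phi z 1) ->
  (forall z : R, derivable (derive1 phi) z 1) ->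
  x != 0 ->
  (forall w : 'rV[R]_d, 0 <= glm phi x y w) ->
  let f := glm phi x y wt in
  let a := glm_a phi x y wt in
  let h := glm_h phi x y wt in
  (* (i) *)
  (0 <= a ^+ 2 - 2 * h * f -> h != 0 -> a != 0 ->
     let w1 := wt - (a / h * (1 - Num.sqrt (a ^+ 2 - 2 * h * f) / `|a|)
                      / sqnorm x) *: x in
     taylor2 phi x y wt w1 = 0 /\
     (forall w : 'rV[R]_d, taylor2 phi x y wt w = 0 ->
        2^-1 * sqnorm (w1 - wt) <= 2^-1 * sqnorm (w - wt)))
  /\
  (* (ii) *)
  (a ^+ 2 - 2 * h * f < 0 ->
     0 < h /\
     let w1 := wt - (a / h / sqnorm x) *: x in
     forall w : 'rV[R]_d, taylor2 phi x y wt w1 <= taylor2 phi x y wt w).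
Proof.
move=> _ _ xnz fge f a h.
have Np := sqnorm_gt0 xnz; set N := sqnorm x in Np *.
have NZ : N != 0 by rewrite gt_eqF.
have f0 : 0 <= f by exact: fge.
have shift : forall c : R, (wt - c *: x) - wt = - (c *: x).
  by move=> c; rewrite addrAC subrr add0r.
have ushift : forall c : R, dotp x (- (c *: x)) = - (c * N).
  by move=> c; rewrite dotpNr dotpZr.
have TE : forall w, taylor2 phi x y wt w = f + a * dotp x (w - wt)
      + 2^-1 * (h * (dotp x (w - wt))^+2) by move=> w; rewrite taylor2E.
have key : forall u : R, 2 * h * (f + a * u + 2^-1 * (h * u ^+ 2))
    = (h * u + a) ^+ 2 - (a ^+ 2 - 2 * h * f) by move=> u; field.
have sqZ : forall k : R, sqnorm (- (k *: x)) = (- (k * N)) ^+ 2 / N.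
  move=> k; rewrite /sqnorm dotpNl dotpNr dotpZl dotpZr -/(sqnorm x) -/N.
  by field.
split.
- move=> D0 hnz anz w1.
  set r := Num.sqrt (a ^+ 2 - 2 * h * f).
  have r0 : 0 <= r by exact: sqrtr_ge0.
  have r2 : r ^+ 2 = a ^+ 2 - 2 * h * f by rewrite sqr_sqrtr.
  set c := a / h * (1 - r / `|a|) / N.
  have u1E : dotp x (w1 - wt) = - (c * N) by rewrite /w1 shift ushift.
  have hu1 : h * (- (c * N)) + a = a * r / `|a|.
    by rewrite /c; field; rewrite normr_eq0 anz NZ hnz.
  have hu1sq : (h * (- (c * N)) + a) ^+ 2 = r ^+ 2.
    rewrite hu1 expr_div_n exprMn real_normK ?num_real //.
    by field; rewrite anz.
  have Q1 : taylor2 phi x y wt w1 = 0.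
    rewrite TE u1E; apply/eqP; have := key (- (c * N)).
    rewrite hu1sq -r2 subrr => /eqP; rewrite !mulf_eq0 pnatr_eq0 (negbTE hnz) /=.
    by [].
  split => // w Hw.
  have Q := TE w; rewrite Hw in Q.
  set u := dotp x (w - wt) in Q *.
  set v1 := - (c * N) in u1E hu1 hu1sq.
  have Hu : (h * u + a) ^+ 2 = r ^+ 2.
    have := key u; rewrite -Q mulr0 => /esym/eqP; rewrite subr_eq0 r2 => /eqP.
    by [].
  have aa : a * a / `|a| = `|a|.
    by rewrite -expr2 -real_normK ?num_real // expr2 mulfK // normr_eq0.
  have t1a : (h * v1 + a) * a = `|a| * r.
    rewrite hu1 -[in RHS]aa; field; by rewrite normr_eq0.
  have E1 : (h * v1) ^+ 2 = r ^+ 2 - 2 * (`|a| * r) + a ^+ 2.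
    by rewrite -t1a -hu1sq; ring.
  have E2 : (h * u) ^+ 2 = r ^+ 2 - 2 * ((h * u + a) * a) + a ^+ 2.
    by rewrite -Hu; ring.
  have ta : (h * u + a) * a <= `|a| * r.
    have an1 : a <= `|a| := ler_norm a.
    have an2 : - a <= `|a| by rewrite -normrN ler_norm.
    move/eqP: Hu; rewrite eqf_sqr => /orP [] /eqP ->; nra.
  have le1 : (h * v1) ^+ 2 <= (h * u) ^+ 2 by rewrite E1 E2; lra.
  have le2 : v1 ^+ 2 <= u ^+ 2.
    by move: le1; rewrite !exprMn ler_pM2l // exprn_even_gt0 //.
  have S1 : sqnorm (w1 - wt) = v1 ^+ 2 / N.
    by rewrite /w1 shift sqZ.
  have cs1 := cs (w - wt) Np.
  rewrite -/u -/N in cs1.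
  have le3 : v1 ^+ 2 / N <= u ^+ 2 / N by rewrite ler_wpM2r // invr_ge0 ltW.
  rewrite S1; lra.
- move=> Dn.
  have hpos : 0 < h.
    have := sqr_ge0 a; nra.
  split => // w1 w.
  rewrite !TE /w1 shift ushift.
  set u := dotp x (w - wt).
  rewrite -subr_ge0.
  have -> : f + a * u + 2^-1 * (h * u ^+ 2) -
    (f + a * - (a / h / N * N) + 2^-1 * (h * (- (a / h / N * N)) ^+ 2))
    = 2^-1 * h * (u + a / h) ^+ 2.
    by field; rewrite NZ gt_eqF.
  by rewrite mulr_ge0 ?sqr_ge0 // mulr_ge0 // ?invr_ge0 // ltW.
Qed.
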